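(* Let $G=(V,E)$ be a finite graph (parallel edges and loops allowed) and let $e\neq f$ be two edges of $G$. Then, as polynomials in the variables $\{x_g : g\in E\setminus\{e,f\}\}$, \[ \mathcal{M}_{ef}(1) \;=\; \sum_{\beta,\gamma}\Big(\mathbf{x}^{\beta}\mathbf{x}^{\gamma}\sum_{\mathbf{m}\in B_{\beta,\gamma}} \mathbf{m}\Big), \] where the outer sum runs over all ordered pairs $(\beta,\gamma)$ of disjoint subsets of $E\setminus\{e,f\}$.
   Context: Let $\{x_g : g\in E\}$ be variables (positive reals). For $F\subseteq E$ write $\mathbf{x}^F=\prod_{g\in F}x_g$ and let $k(F)$ be the number of connected components of the spanning subgraph $(V,F)$. For $A,B\subseteq E$ set $\mathcal{T}_A^B=\sum_{F\subseteq E:\,A\subseteq F,\,F\cap B=\varnothing}\mathbf{x}^F q^{k(F)}$. Write $\mathcal{T}_e^f=\mathcal{T}_{\{e\}}^{\{f\}}$, $\mathcal{T}_f^e=\mathcal{T}_{\{f\}}^{\{e\}}$, $\mathcal{T}_{ef}=\mathcal{T}_{\{e,f\}}^{\varnothing}$, $\mathcal{T}^{ef}=\mathcal{T}_{\varnothing}^{\{e,f\}}$. The difference $\mathcal{T}_e^f\mathcal{T}_f^e-\mathcal{T}_{ef}\mathcal{T}^{ef}$ is divisible by $x_ex_f(1-q)$, and $\mathcal{M}_{ef}(q):=(\mathcal{T}_e^f\mathcal{T}_f^e-\mathcal{T}_{ef}\mathcal{T}^{ef})/(x_ex_f(1-q))$; $\mathcal{M}_{ef}(1)$ is this polynomial evaluated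 at $q=1$. Let $E^{ef}=E\setminus\{e,f\}$. A subset $F\subseteq E^{ef}$ is a paracel if $e$ and $f$ both join the same two distinct connected components of $(V,F)$; equivalently $(V,F+e)$ and $(V,F+f)$ have the same connected components (as vertex sets) and $k(F+e)=k(F+f)=k(F)-1$. For a paracel $F$, an edge of $E^{ef}\setminus F$ is a smoot for $F$ if it also joins those same two components of $(V,F)$. Given disjoint $\beta,\gamma\subseteq E^{ef}$, a subset $\alpha\subseteq E^{ef}$ is compatible with $\beta,\gamma$ if $\alpha$ is disjoint from $\beta$ and $\gamma$, $\gamma\cup\alpha$ is a paracel, and every edge of $\beta$ is a smoot for $\gamma\cup\alpha$. Let $A_{\beta,\gamma}$ be the set of such $\alpha$. Two elements $\alpha,\alpha'\in A_{\beta,\gamma}$ (possibly equal) are twins if $\alpha\cap\alpha'\in A_{\beta,\gamma}$. $B_{\beta,\gamma}$ is the set (each monomial counted once) of monomials of the form $\mathbf{x}^{\alpha}\mathbf{x}^{\alpha'}$ with $\alpha,\alpha'$ twins in $A_{\beta,\gamma}$. *)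

(* Defs.v *)
From HB Require Import structures.
From mathcomp Require Import all_boot all_order all_algebra.
From mathcomp Require Import mpoly.
Set Implicit Arguments. Unset Strict Implicit. Unset Printing Implicit Defensive.
Import GRing.Theory.
Local Open Scope ring_scope.

(* A finite multigraph (loops and parallel edges allowed): vertex set V (a
   finType), edge set 'I_m, and ends : 'I_m -> V * V giving the two
   endpoints of each edge (equal endpoints = loop). *)
Section Graph.
Variables (V : finType) (m : nat) (ends : 'I_m -> V * V).

Definition adjF (F : {set 'I_m}) : rel V :=
  fun u v => [exists g in F, (ends g == (u, v)) || (ends g == (v, u))].

Definition compF (F : {set 'I_m}) (u : V) : {set V} :=
  [set v | connect (adjF F) u v].

Definition kcomp (F : {set 'I_m}) : nat :=
  #|[set compF F u | u : V]|.

Definition joined (F : {set 'I_m}) (g : 'I_m) : {set {set V}} :=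
  [set compF F (ends g).1; compF F (ends g).2].

Definition Eef (e f : 'I_m) : {set 'I_m} := [set: 'I_m] :\ e :\ f.

Definition paracel (e f : 'I_m) (F : {set 'I_m}) : bool :=
  [&& F \subset Eef e f,
      compF F (ends e).1 != compF F (ends e).2 &
      joined F e == joined F f].

Definition smoot (e f : 'I_m) (F : {set 'I_m}) (g : 'I_m) : bool :=
  (g \in Eef e f :\: F) && (joined F g == joined F e).

Definition compatible (e f : 'I_m) (beta gamma alpha : {set 'I_m}) : bool :=
  [&& alpha \subset Eef e f,
      [disjoint alpha & beta], [disjoint alpha & gamma],
      paracel e f (gamma :|: alpha) &
      [forall g in beta, smoot e f (gamma :|: alpha) g]].

Definition Aset (e f : 'I_m) (beta gamma : {set 'I_m}) : {set {set 'I_m}} :=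
  [set alpha | compatible e f beta gamma alpha].

Definition twins (e f : 'I_m) (beta gamma a a' : {set 'I_m}) : bool :=
  [&& a \in Aset e f beta gamma, a' \in Aset e f beta gamma &
      (a :&: a') \in Aset e f beta gamma].

Definition xmon (F : {set 'I_m}) : {mpoly int[m]} := \prod_(g in F) 'X_g.

Definition Bset (e f : 'I_m) (beta gamma : {set 'I_m}) : seq {mpoly int[m]} :=
  undup [seq xmon p.1 * xmon p.2 |
          p <- enum [pred p : {set 'I_m} * {set 'I_m} |
                      twins e f beta gamma p.1 p.2]].

(* T_A^B as a polynomial in q (the variable 'X of {poly _}) with
   coefficients in Z[x_g : g in E] *)
Definition Tpoly (A B : {set 'I_m}) : {poly {mpoly int[m]}} :=
  \sum_(F : {set 'I_m} | (A \subset F) && [disjoint F & B])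
     (xmon F)%:P * 'X ^+ kcomp F.

Definition Ddiff (e f : 'I_m) : {poly {mpoly int[m]}} :=
  Tpoly [set e] [set f] * Tpoly [set f] [set e]
  - Tpoly [set e; f] set0 * Tpoly set0 [set e; f].

Definition rhs35 (e f : 'I_m) : {mpoly int[m]} :=
  \sum_(p : {set 'I_m} * {set 'I_m} |
          [&& p.1 \subset Eef e f, p.2 \subset Eef e f & [disjoint p.1 & p.2]])
     (xmon p.1 * xmon p.2 * \sum_(mo <- Bset e f p.1 p.2) mo).

End Graph.

(* Main.v *)
Require Import Defs.
From HB Require Import structures.
From mathcomp Require Import all_boot all_order all_algebra.
From mathcomp Require Import mpoly.
From mathcomp Require Import ring.
Set Implicit Arguments. Unset Strict Implicit. Unset Printing Implicit Defensive.
Import GRing.Theory.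


Section Graph.
Variables (V : finType) (m : nat) (ends : 'I_m -> V * V).

Implicit Types F : {set 'I_m}.
Local Notation adj F := (adjF ends F).
Local Notation cn F := (connect (adjF ends F)).
Local Notation comp F := (compF ends F).

Lemma adj_sym F : ssrbool.symmetric (adj F).
Proof. by move=> u v; apply: eq_existsb => g; rewrite orbC. Qed.

Lemma csym F : connect_sym (adj F).
Proof. exact: sym_connect_sym (adj_sym F). Qed.

Lemma cn_sym F x y : cn F x y = cn F y x.
Proof. exact: csym. Qed.

Lemma cn_trans F x y z : cn F x y -> cn F y z -> cn F x z.
Proof. exact: connect_trans. Qed.

Lemma comp_eq F u v : (comp F u == comp F v) = cn F u v.
Proof.
apply/eqP/idP.
  move=> h; have : v \in comp F v by rewrite inE connect0.
  by rewrite -h inE.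
move=> c; apply/setP=> w; rewrite !inE.
exact: (same_connect (csym F) c).
Qed.

Lemma adjP F x y : adj F x y ->
  exists2 h, h \in F & ((ends h).1 = x /\ (ends h).2 = y) \/ ((ends h).1 = y /\ (ends h).2 = x).
Proof.
move=> /existsP [h /andP [hF /orP [/eqP E|/eqP E]]]; exists h => //; rewrite E; by [left|right].
Qed.

Lemma edge_cn F h : h \in F -> cn F (ends h).1 (ends h).2.
Proof.
move=> hF; apply: connect1; apply/existsP; exists h; rewrite hF /=.
by case: (ends h) => a b; rewrite eqxx.
Qed.

Lemma cn_mono F F' x y : F \subset F' -> cn F x y -> cn F' x y.
Proof.
move=> sFF'; apply: connect_sub => u v /adjP [h hF H]; apply: connect1.
apply/existsP; exists h; rewrite (subsetP sFF' _ hF) /=.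
by case: H => [[<- <-]|[<- <-]]; case: (ends h) => a b; rewrite eqxx ?orbT.
Qed.

Lemma closed_edges F (W : pred V) x y :
  (forall h, h \in F -> W (ends h).1 = W (ends h).2) -> cn F x y -> W x = W y.
Proof.
move=> H; have : closed (adj F) W.
  move=> u v /adjP [h hF [[<- <-]|[<- <-]]]; rewrite ?unfold_in /= ?(H h hF) //.
by move=> cl c; have := closed_connect cl c.
Qed.

Lemma set2_eq (T : finType) (a b a' b' : T) :
  ([set a; b] == [set a'; b']) = ((a == a') && (b == b')) || ((a == b') && (b == a')).
Proof.
apply/eqP/idP.
  move=> E.
  have ha : a \in [set a'; b'] by rewrite -E !inE eqxx.
  have hb : b \in [set a'; b'] by rewrite -E !inE eqxx orbT.
  have ha' : a' \in [set a; b] by rewrite E !inE eqxx.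
  have hb' : b' \in [set a; b] by rewrite E !inE eqxx orbT.
  move: ha hb ha' hb'; rewrite !inE => /orP[] /eqP ? /orP[] /eqP ? /orP[] /eqP ? /orP[] /eqP ?;
  subst; rewrite ?eqxx ?orbT //.
move=> /orP [/andP [/eqP -> /eqP ->]|/andP [/eqP -> /eqP ->]] //.
by rewrite setUC.
Qed.

Definition Jn F (g h : 'I_m) :=
  (cn F (ends g).1 (ends h).1 && cn F (ends g).2 (ends h).2) ||
  (cn F (ends g).1 (ends h).2 && cn F (ends g).2 (ends h).1).

Lemma joinedE F g h : (joined ends F g == joined ends F h) = Jn F g h.
Proof. by rewrite /joined set2_eq !comp_eq. Qed.

Lemma Jn_mono F F' g h : F \subset F' -> Jn F g h -> Jn F' g h.
Proof.
move=> s /orP [/andP [a b]|/andP [a b]]; apply/orP; [left|right];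
by rewrite !(cn_mono s).
Qed.

Lemma Jn_sym F g h : Jn F g h = Jn F h g.
Proof.
rewrite /Jn (cn_sym F (ends h).1 (ends g).1) (cn_sym F (ends h).2 (ends g).2).
rewrite (cn_sym F (ends h).1 (ends g).2) (cn_sym F (ends h).2 (ends g).1).
by congr (_ || _); rewrite andbC.
Qed.

Lemma Jn_edge F F' g e : F \subset F' -> g \in F' -> Jn F g e ->
  cn F' (ends e).1 (ends e).2.
Proof.
move=> s gF /orP [/andP [a b]|/andP [a b]];
have c := edge_cn gF; have a' := cn_mono s a; have b' := cn_mono s b.
  apply: cn_trans (cn_trans c b'); by rewrite cn_sym.
apply: (@cn_trans _ _ (ends g).2); first by rewrite cn_sym.
apply: (@cn_trans _ _ (ends g).1) a'; by rewrite cn_sym.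
Qed.


Section AddEdge.
Variables (F : {set 'I_m}) (g : 'I_m).
Let g1 := (ends g).1.
Let g2 := (ends g).2.
Definition inKL x := cn F g1 x || cn F g2 x.

Lemma inKL_edge h : h \in F -> inKL (ends h).1 = inKL (ends h).2.
Proof.
move=> hF; have E := same_connect_r (csym F) (edge_cn hF).
by rewrite /inKL !E.
Qed.

Lemma connU u v : cn (g |: F) u v = cn F u v || (inKL u && inKL v).
Proof.
apply/idP/idP.
  move=> c; case hu: (inKL u).
    have := closed_edges (W := inKL) _ c; rewrite hu => <-; first by rewrite orbT.
    move=> h; rewrite in_setU1 => /orP [/eqP ->|hF]; last exact: inKL_edge.
    by rewrite /inKL !connect0 ?orbT.
  have := closed_edges (W := cn F u) _ c; rewrite connect0 => <- //.
  move=> h; rewrite in_setU1 => /orP [/eqP ->|hF].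
    move: hu; rewrite /inKL (cn_sym F g1 u) (cn_sym F g2 u) /g1 /g2.
    by case: (cn F u (ends g).1); case: (cn F u (ends g).2).
  exact: (same_connect_r (csym F) (edge_cn hF)).
case/orP => [c|/andP [hu hv]]; first by apply: cn_mono c; apply: subsetUr.
have e12 : cn (g |: F) g1 g2 by apply: edge_cn; rewrite setU11.
have K x : inKL x -> cn (g |: F) g1 x.
  case/orP => c; have c' := cn_mono (subsetUr [set g] F) c.
    by [].
  exact: cn_trans e12 c'.
apply: cn_trans (K _ hv); by rewrite cn_sym K.
Qed.

Definition psi (X : {set V}) :=
  if (X == comp F g1) || (X == comp F g2) then comp F g1 :|: comp F g2 else X.

Lemma inKL_comp u : inKL u = (comp F u == comp F g1) || (comp F u == comp F g2).
Proof. by rewrite /inKL !comp_eq !(cn_sym F u). Qed.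

Lemma compU u : comp (g |: F) u = psi (comp F u).
Proof.
apply/setP => v; rewrite /psi -inKL_comp inE connU.
case hu: (inKL u); last by rewrite andFb orbF inE.
rewrite andTb !inE.
apply/orP/idP => [[c|h]|h]; last by right.
  move: hu; rewrite /inKL => /orP [] c'.
    by rewrite (cn_trans c' c).
  by rewrite (cn_trans c' c) orbT.
by [].
Qed.

Lemma comp_mem u v : v \in comp F u -> comp F v = comp F u.
Proof. by rewrite inE => c; apply/eqP; rewrite comp_eq cn_sym. Qed.

Lemma kcompU : kcomp ends F = kcomp ends (g |: F) + (comp F g1 != comp F g2).
Proof.
rewrite /kcomp.
set S := [set comp F u | u : V].
have -> : [set comp (g |: F) u | u : V] = [set psi (comp F u) | u : V].
  by apply: eq_imset => u; rewrite compU.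
rewrite imset_comp -/S.
case: eqP => [EKL|NKL].
  rewrite addn0 (eq_imset _ (g := id)) ?imset_id // => X.
  by rewrite /psi -EKL orbb setUid; case: eqP.
have KS : comp F g1 \in S by apply: imset_f.
have LS : comp F g2 \in S by apply: imset_f.
have -> : psi @: S = psi @: (S :\ comp F g2).
  apply/setP => Y; apply/imsetP/imsetP => [[X XS ->]|[X]]; last first.
    by rewrite inE => /andP [_ XS] ->; exists X.
  case: (eqVneq X (comp F g2)) => [EX|NX].
    exists (comp F g1); first by rewrite !inE KS andbT; apply/eqP.
    by rewrite /psi EX !eqxx orbT.
  by exists X => //; rewrite !inE NX.
rewrite card_in_imset; last first.
  move=> X Y; rewrite !inE => /andP [XL /imsetP [x _ EX]] /andP [YL /imsetP [y _ EY]]; subst X Y.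
  rewrite /psi; move: XL YL.
  case: (eqVneq (comp F x) (comp F g1)) => [->|XK];
  case: (eqVneq (comp F y) (comp F g1)) => [->|YK] //= XL YL.
  - rewrite (negbTE YL) => E.
    have : g1 \in comp F y by rewrite -E; apply/setUP; left; rewrite inE connect0.
    by move/comp_mem => E'; rewrite E' eqxx in YK.
  - rewrite (negbTE XL) => E.
    have : g1 \in comp F x by rewrite E; apply/setUP; left; rewrite inE connect0.
    by move/comp_mem => E'; rewrite E' eqxx in XK.
  - by rewrite (negbTE XL) (negbTE YL).
by rewrite (cardsD1 (comp F g2) S) LS add1n addn1.
Qed.

End AddEdge.


Lemma eqv4 (T : Type) (r : rel T) (sym : forall x y, r x y = r y x)
  (tr : forall x y z, r x y -> r y z -> r x z) a b x y :
  [&& (r a b && r a x) ==> r b x, (r a b && r b y) ==> r a y,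
      (r a x && r b x) ==> r a b, (r a x && r x y) ==> r a y,
      (r a y && r b y) ==> r a b, (r a y && r x y) ==> r a x,
      (r a b && r a y) ==> r b y, (r b x && r x y) ==> r b y,
      (r b y && r x y) ==> r b x, (r a x && r a y) ==> r x y
    & (r b x && r b y) ==> r x y].
Proof.
have t1 : (r a b && r b x) ==> r a x by apply/implyP => /andP [h1 h2]; exact: tr h1 h2.
have t2 : (r a b && r b y) ==> r a y by apply/implyP => /andP [h1 h2]; exact: tr h1 h2.
have t3 : (r a x && r x b) ==> r a b by apply/implyP => /andP [h1 h2]; exact: tr h1 h2.
have t4 : (r a x && r x y) ==> r a y by apply/implyP => /andP [h1 h2]; exact: tr h1 h2.
have t5 : (r a y && r y b) ==> r a b by apply/implyP => /andP [h1 h2]; exact: tr h1 h2.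
have t6 : (r a y && r y x) ==> r a x by apply/implyP => /andP [h1 h2]; exact: tr h1 h2.
have t7 : (r b a && r a x) ==> r b x by apply/implyP => /andP [h1 h2]; exact: tr h1 h2.
have t8 : (r b a && r a y) ==> r b y by apply/implyP => /andP [h1 h2]; exact: tr h1 h2.
have t9 : (r b x && r x y) ==> r b y by apply/implyP => /andP [h1 h2]; exact: tr h1 h2.
have t10 : (r b y && r y x) ==> r b x by apply/implyP => /andP [h1 h2]; exact: tr h1 h2.
have t11 : (r x a && r a y) ==> r x y by apply/implyP => /andP [h1 h2]; exact: tr h1 h2.
have t12 : (r x b && r b y) ==> r x y by apply/implyP => /andP [h1 h2]; exact: tr h1 h2.
rewrite ?(sym b a) ?(sym x a) ?(sym y a) ?(sym x b) ?(sym y b) ?(sym y x) in t1 t2 t3 t4 t5 t6 t7 t8 t9 t10 t11 t12 *.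
move: t1 t2 t3 t4 t5 t6 t7 t8 t9 t10 t11 t12.
by case: (r a b); case: (r a x); case: (r a y); case: (r b x); case: (r b y); case: (r x y).
Qed.

Lemma cneqv4 F a b x y :
  [&& (cn F a b && cn F a x) ==> cn F b x, (cn F a b && cn F b y) ==> cn F a y,
      (cn F a x && cn F b x) ==> cn F a b, (cn F a x && cn F x y) ==> cn F a y,
      (cn F a y && cn F b y) ==> cn F a b, (cn F a y && cn F x y) ==> cn F a x,
      (cn F a b && cn F a y) ==> cn F b y, (cn F b x && cn F x y) ==> cn F b y,
      (cn F b y && cn F x y) ==> cn F b x, (cn F a x && cn F a y) ==> cn F x y
    & (cn F b x && cn F b y) ==> cn F x y].
Proof. apply: (@eqv4 _ (connect (adjF ends F))) => [u v|u v w]; [exact: cn_sym|exact: cn_trans]. Qed.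


Lemma disjP (T : finType) (A B : {set T}) :
  reflect (forall x, x \in A -> x \in B -> False) [disjoint A & B].
Proof.
rewrite -setI_eq0; apply: (iffP eqP) => [E x xA xB|H].
  have : x \in A :&: B by rewrite inE xA xB.
  by rewrite E inE.
apply/setP => x; rewrite !inE; apply/negP => /andP [xA xB]; exact: H xA xB.
Qed.

Section EF.
Variables (e f : 'I_m).
Implicit Types A B : {set 'I_m}.

Lemma paracelE A : paracel ends e f A =
  [&& A \subset Eef e f, ~~ cn A (ends e).1 (ends e).2 & Jn A e f].
Proof. by rewrite /paracel comp_eq joinedE. Qed.

Lemma smootE A g : smoot ends e f A g = (g \in Eef e f :\: A) && Jn A g e.
Proof. by rewrite /smoot joinedE. Qed.

Lemma paracel_br A : A \subset Eef e f -> paracel ends e f A =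
  (comp A (ends f).1 != comp A (ends f).2) &&
  ~~ (comp (e |: A) (ends f).1 != comp (e |: A) (ends f).2).
Proof.
move=> sA; rewrite paracelE sA !comp_eq connU /inKL /Jn negbK /=.
have := cneqv4 A (ends e).1 (ends e).2 (ends f).1 (ends f).2.
by case: (cn A (ends e).1 (ends e).2); case: (cn A (ends e).1 (ends f).1);
   case: (cn A (ends e).1 (ends f).2); case: (cn A (ends e).2 (ends f).1);
   case: (cn A (ends e).2 (ends f).2); case: (cn A (ends f).1 (ends f).2).
Qed.

Lemma br_mono A : (comp (e |: A) (ends f).1 != comp (e |: A) (ends f).2) ->
  (comp A (ends f).1 != comp A (ends f).2).
Proof.
rewrite !comp_eq; apply: contra; apply: cn_mono; exact: subsetUr.
Qed.


Definition Qc (be ga : {set 'I_m}) (q : {set 'I_m} * {set 'I_m}) : bool :=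
  [&& q.1 \in Aset ends e f be ga, q.2 \subset Eef e f, [disjoint q.2 & q.1],
      [disjoint q.2 & be], [disjoint q.2 & ga] &
      [forall g in q.2, ~~ smoot ends e f (ga :|: q.1) g]].

Lemma compat_ext be ga I (J' : {set 'I_m}) : compatible ends e f be ga I ->
  J' \subset Eef e f -> [disjoint J' & be] -> [disjoint J' & ga] ->
  ~~ cn (ga :|: (I :|: J')) (ends e).1 (ends e).2 ->
  compatible ends e f be ga (I :|: J').
Proof.
case/and5P => sI dIb dIg par sm sJ dJb dJg nc.
have sF : ga :|: I \subset ga :|: (I :|: J') by rewrite setUA subsetUl.
rewrite paracelE in par; case/and3P: par => sFE _ JF.
move: sFE; rewrite subUset => /andP [sg sI'].
apply/and5P; split.
- by rewrite subUset sI sJ.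
- apply/disjP => x; rewrite inE => /orP [xI|xJ] xb.
    exact: (disjP _ _ dIb) xI xb.
  exact: (disjP _ _ dJb) xJ xb.
- apply/disjP => x; rewrite inE => /orP [xI|xJ] xb.
    exact: (disjP _ _ dIg) xI xb.
  exact: (disjP _ _ dJg) xJ xb.
- rewrite paracelE nc (Jn_mono sF JF) andbT.
  by rewrite !subUset sg sI sJ.
apply/forallP => g; apply/implyP => gb.
move/forallP/(_ g)/implyP/(_ gb): sm; rewrite !smootE => /andP [gE Jg].
rewrite (Jn_mono sF Jg) andbT.
have gJ : (g \in J') = false by apply/negP => gJ; exact: (disjP _ _ dJb) gJ gb.
move: gE; rewrite !inE gJ.
by case: (g \in ga); case: (g \in I) => //= ->.
Qed.

Lemma twins_Q be ga a a' : twins ends e f be ga a a' ->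
  Qc be ga (a :&: a', (a :\: a') :|: (a' :\: a)).
Proof.
case/and3P; rewrite !inE => ca ca' cI.
rewrite /Qc /= inE cI /=.
case/and5P: ca => sa dab dag para _.
case/and5P: ca' => sa' dab' dag' para' _.
apply/and5P; split.
- apply/subsetP => x /setUP [/setDP [xa _]|/setDP [xa _]].
    exact: (subsetP sa x xa).
  exact: (subsetP sa' x xa).
- apply/disjP => x; rewrite !inE; by case: (x \in a); case: (x \in a').
- apply/disjP => x; rewrite !inE => /orP [/andP [_ xa]|/andP [_ xa]] xb.
    exact: (disjP _ _ dab) xa xb.
  exact: (disjP _ _ dab') xa xb.
- apply/disjP => x; rewrite !inE => /orP [/andP [_ xa]|/andP [_ xa]] xb.
    exact: (disjP _ _ dag) xa xb.
  exact: (disjP _ _ dag') xa xb.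
apply/forallP => g; apply/implyP; rewrite !inE.
case/orP => [/andP [_ gx]|/andP [_ gx]]; apply/negP; rewrite smootE => /andP [_ Jg].
  have := Jn_edge (F' := ga :|: a) _ _ Jg; rewrite setUS ?subsetIl // inE gx orbT.
  move=> /(_ isT isT) c; move: para; rewrite paracelE c.
  by rewrite andbF.
have := Jn_edge (F' := ga :|: a') _ _ Jg; rewrite setUS ?subsetIr // inE gx orbT.
move=> /(_ isT isT) c; move: para'; rewrite paracelE c.
by rewrite andbF.
Qed.


Definition J1of (ga I J : {set 'I_m}) : {set 'I_m} :=
  [set j in J | cn (ga :|: I) (ends e).1 (ends j).1 || cn (ga :|: I) (ends e).1 (ends j).2].

Lemma inter_J1 (I J J1 : {set 'I_m}) : [disjoint J & I] -> J1 \subset J ->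
  (I :|: J1) :&: (I :|: (J :\: J1)) = I.
Proof.
move=> dJI sJ1; apply/setP => x; rewrite !inE.
case xI: (x \in I) => //=; case xJ1: (x \in J1) => //=.
Qed.

Lemma Q_twins be ga I J : Qc be ga (I, J) ->
  twins ends e f be ga (I :|: J1of ga I J) (I :|: (J :\: J1of ga I J)).
Proof.
rewrite /Qc /= => /andP [cI /and5P [sJ dJI dJb dJg nsm]].
have sJ1 : J1of ga I J \subset J by apply/subsetP => x; rewrite inE => /andP [].
rewrite /twins inter_J1 // cI andbT.
move: cI; rewrite inE => cI.
have cI' := cI.
case/and5P: cI' => sI dIb dIg para smI.
rewrite paracelE in para; case/and3P: para => sF ncF JF.
set F := ga :|: I.
have sub_d (J' : {set 'I_m}) (X : {set 'I_m}) : J' \subset J -> [disjoint J & X] -> [disjoint J' & X].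
  move=> sJ' dJ; apply/disjP => x xJ' xX; exact: (disjP _ _ dJ) x (subsetP sJ' x xJ') xX.
have sJD : J :\: J1of ga I J \subset J by apply/subsetP => x /setDP [].
have edgeF h : h \in ga :|: (I :|: J) -> h \in F \/ (h \in J /\ h \notin F).
  rewrite setUA -/F inE => /orP [hF|hJ]; [by left|right; split => //].
  rewrite inE negb_or; apply/andP; split; apply/negP => h'.
    exact: (disjP _ _ dJg) h hJ h'.
  exact: (disjP _ _ dJI) h hJ h'.
have subJ (J' : {set 'I_m}) h : J' \subset J -> h \in ga :|: (I :|: J') -> h \in ga :|: (I :|: J).
  by move=> sJ'; rewrite !inE => /orP [->|/orP [->|hJ]]; rewrite ?orbT // (subsetP sJ' h hJ) !orbT.
rewrite !inE; apply/andP; split.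
  apply: compat_ext => //.
  - exact: subset_trans sJ1 sJ.
  - exact: sub_d.
  - exact: sub_d.
  apply/negP => c.
  suff H : forall h, h \in ga :|: (I :|: J1of ga I J) ->
    ~~ cn F (ends e).2 (ends h).1 = ~~ cn F (ends e).2 (ends h).2.
    have := closed_edges (W := fun v => ~~ cn F (ends e).2 v) H c.
    by rewrite /= connect0 cn_sym (negbTE ncF).
  move=> h hin; have := edgeF h (subJ _ h sJ1 hin).
  case => [hF|[hJ hnF]].
    by rewrite (same_connect_r (csym F) (edge_cn hF)).
  have hJ1 : h \in J1of ga I J.
    move: hin; rewrite !inE => /orP [hg|/orP [hI|]] //; exfalso; move: hnF; by rewrite !inE ?hg ?hI ?orbT.
  move: hJ1; rewrite inE hJ /= => c1.
  move/forallP/(_ h): nsm; rewrite hJ /= smootE.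
  have hE : h \in Eef e f :\: F by rewrite inE hnF (subsetP sJ h hJ).
  rewrite hE /= /Jn -/F => nJ.
  move: c1 nJ ncF.
  rewrite (cn_sym F (ends h).1 (ends e).1) (cn_sym F (ends h).2 (ends e).2).
  rewrite (cn_sym F (ends h).1 (ends e).2) (cn_sym F (ends h).2 (ends e).1).
  have := cneqv4 F (ends e).1 (ends e).2 (ends h).1 (ends h).2.
  by case: (cn F (ends e).1 (ends e).2); case: (cn F (ends e).1 (ends h).1);
     case: (cn F (ends e).1 (ends h).2); case: (cn F (ends e).2 (ends h).1);
     case: (cn F (ends e).2 (ends h).2); case: (cn F (ends h).1 (ends h).2).
apply: compat_ext => //.
- exact: subset_trans sJD sJ.
- exact: sub_d.
- exact: sub_d.
apply/negP => c.
suff H : forall h, h \in ga :|: (I :|: (J :\: J1of ga I J)) ->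
  cn F (ends e).1 (ends h).1 = cn F (ends e).1 (ends h).2.
  have := closed_edges (W := fun v => cn F (ends e).1 v) H c.
  by rewrite /= connect0 (negbTE ncF).
move=> h hin; have := edgeF h (subJ _ h sJD hin).
case => [hF|[hJ hnF]].
  by rewrite (same_connect_r (csym F) (edge_cn hF)).
have hJ2 : h \in J :\: J1of ga I J.
  move: hin; rewrite inE => /orP [hg|]; first by exfalso; move: hnF; rewrite !inE hg.
  rewrite inE => /orP [hI|] //; exfalso; move: hnF; by rewrite !inE hI orbT.
move: hJ2; rewrite !inE hJ /= andbT negb_or => /andP [/negbTE -> /negbTE ->].
by [].
Qed.

End EF.

End Graph.

Section Mono.
Variable m : nat.
Implicit Types S A B C : {set 'I_m}.
Local Open Scope ring_scope.

Definition mn S : 'X_{1.. m} := (\sum_(g in S) U_(g))%MM.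

Lemma xmonE S : xmon S = 'X_[mn S].
Proof.
rewrite /xmon /mn.
by rewrite (big_morph (fun x : 'X_{1.. m} => ('X_[x] : {mpoly int[m]})) (@mpolyXD _ _) (@mpolyX0 _ _)).
Qed.

Lemma mnE S i : mn S i = (i \in S).
Proof.
rewrite /mn mnm_sumE.
case: (boolP (i \in S)) => iS.
  rewrite (bigD1 i) //= mnm1E eqxx big1 // => g /andP [_ gi].
  by rewrite mnm1E (negbTE gi).
rewrite big1 // => g gS; rewrite mnm1E; case: eqP => // E.
by rewrite -E gS in iS.
Qed.

Lemma xmon2 A B : xmon A * xmon B = 'X_[mn A + mn B].
Proof. by rewrite !xmonE mpolyXD. Qed.

Lemma xmon3 A B C : xmon A * xmon B * xmon C = 'X_[mn A + mn B + mn C].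
Proof. by rewrite xmon2 xmonE -mpolyXD. Qed.

Lemma mpolyX_inj (a b : 'X_{1.. m}) : ('X_[a] : {mpoly int[m]}) = 'X_[b] -> a = b.
Proof.
move=> E; have := mcoeffX int a a; rewrite E mcoeffX eqxx.
by case: eqP => // _ /eqP; rewrite oner_eq0.
Qed.

End Mono.



Section Bsum.
Variables (V : finType) (m : nat) (ends : 'I_m -> V * V) (e f : 'I_m).
Local Open Scope ring_scope.

Lemma Bsum be ga : \sum_(mo <- Bset ends e f be ga) mo =
  \sum_(q | Qc ends e f be ga q) (xmon q.1 * xmon q.1 * xmon q.2).
Proof.
set H := fun q : {set 'I_m} * {set 'I_m} => xmon q.1 * xmon q.1 * xmon q.2.
have P : perm_eq (Bset ends e f be ga) [seq H q | q <- enum (Qc ends e f be ga)].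
  apply: uniq_perm; first exact: undup_uniq.
    rewrite map_inj_in_uniq ?enum_uniq // => [[I J] [I' J']].
    rewrite !mem_enum /H /= => Qq Qq'.
    rewrite !xmon3 => /mpolyX_inj/mnmP E.
    case/and5P: Qq => _ _ dJI _ _; case/and5P: Qq' => _ _ dJI' _ _.
    have EE i := E i.
    congr pair; apply/setP => i; move: (EE i); rewrite !mnmDE !mnE;
    have := disjP _ _ dJI i; have := disjP _ _ dJI' i;
    by case: (i \in I); case: (i \in J); case: (i \in I'); case: (i \in J') => // /(_ isT isT) [] || (move=> _ /(_ isT isT) []).
  move=> mo; rewrite mem_undup; apply/mapP/mapP => [[p pin ->]|[q qin ->]].
    rewrite mem_enum in pin.
    exists (p.1 :&: p.2, (p.1 :\: p.2) :|: (p.2 :\: p.1)).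
      by rewrite mem_enum; apply: twins_Q.
    rewrite /H /= xmon2 xmon3; congr mpolyX; apply/mnmP => i.
    by rewrite !mnmDE !mnE !inE; case: (i \in p.1); case: (i \in p.2).
  case: q qin => I J; rewrite mem_enum => Qq.
  exists (I :|: J1of ends e ga I J, I :|: (J :\: J1of ends e ga I J)).
    by rewrite mem_enum /=; apply: Q_twins.
  have sJ1 : J1of ends e ga I J \subset J by apply/subsetP => x; rewrite inE => /andP [].
  case/and5P: Qq => _ _ dJI _ _.
  rewrite /H /= xmon3 xmon2; congr mpolyX; apply/mnmP => i.
  rewrite !mnmDE !mnE !in_setU !in_setD.
  have h1 := subsetP sJ1 i; have h2 := disjP _ _ dJI i; move: h1 h2 => /=.
  case: (i \in I); case: (i \in J); case: (i \in J1of ends e ga I J) => //= h1 h2;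
  try (by have := h1 isT); by case: (h2 isT isT).
rewrite (perm_big _ P) big_map big_enum /=.
by [].

Qed.

End Bsum.


Section Poly.
Variables (V : finType) (m : nat) (ends : 'I_m -> V * V) (e f : 'I_m).
Variable hef : e != f.
Local Open Scope ring_scope.

Lemma sum_reindex (T : nmodType) (D X : {set 'I_m}) (h : {set 'I_m} -> T) :
  [disjoint D & X] ->
  \sum_(F : {set 'I_m} | (D \subset F) && [disjoint F & X]) h F =
  \sum_(A : {set 'I_m} | A \subset ~: (D :|: X)) h (D :|: A).
Proof.
move=> dDX.
rewrite (reindex_onto (fun A => D :|: A) (fun F => F :\: D)) /=; last first.
  move=> F /andP [sDF _]; apply/setP => x; rewrite !inE.
  by case: (boolP (x \in D)) => //= xD; rewrite (subsetP sDF).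
apply: eq_bigl => A; rewrite subsetUl /=.
apply/andP/idP.
  move=> [dAX /eqP EA]; apply/subsetP => x xA; rewrite !inE negb_or.
  have : x \in (D :|: A) :\: D by rewrite EA.
  rewrite inE => /andP [-> _] /=; apply/negP => xX.
  by have := disjP _ _ dAX x; rewrite inE xA orbT => /(_ isT xX).
move=> sA; split.
  apply/disjP => x; rewrite inE => /orP [xD|xA] xX.
    exact: (disjP _ _ dDX) xD xX.
  by have := subsetP sA x xA; rewrite !inE xX orbT.
apply/eqP/setP => x; rewrite !inE.
case: (boolP (x \in A)) => xA; last first.
  by rewrite orbF andNb.
rewrite orbT andbT; by have := subsetP sA x xA; rewrite !inE negb_or => /andP [-> _].
Qed.

Lemma EefC : ~: ([set e] :|: [set f]) = Eef e f.
Proof. by apply/setP => x; rewrite !inE negb_or andbT andbC. Qed.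

Definition Te (A : {set 'I_m}) : {poly {mpoly int[m]}} := (xmon A)%:P * 'X^(kcomp ends A).

Lemma Tpoly_ef : Tpoly ends [set e] [set f] = \sum_(A : {set 'I_m} | A \subset Eef e f) Te (e |: A).
Proof.
rewrite /Tpoly (sum_reindex (fun F => Te F)) ?EefC //.
by rewrite disjoint_sym disjoints1 inE eq_sym.
Qed.

Lemma Tpoly_fe : Tpoly ends [set f] [set e] = \sum_(A : {set 'I_m} | A \subset Eef e f) Te (f |: A).
Proof.
rewrite /Tpoly (sum_reindex (fun F => Te F)) ?(setUC [set f]) ?EefC //.
by rewrite disjoint_sym disjoints1 inE.
Qed.

Lemma Tpoly_both : Tpoly ends [set e; f] set0 =
  \sum_(A : {set 'I_m} | A \subset Eef e f) Te (f |: (e |: A)).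
Proof.
rewrite /Tpoly (sum_reindex (fun F => Te F)); last by apply/disjP => x _; rewrite inE.
rewrite setU0 EefC; apply: eq_bigr => A _.
by rewrite setUA [[set f] :|: _]setUC.
Qed.

Lemma Tpoly_none : Tpoly ends set0 [set e; f] = \sum_(A : {set 'I_m} | A \subset Eef e f) Te A.
Proof.
rewrite /Tpoly (sum_reindex (fun F => Te F)); last by apply/disjP => x; rewrite inE.
by rewrite set0U EefC; apply: eq_bigr => A _; rewrite set0U.
Qed.


Definition gq (b a : nat) : {poly {mpoly int[m]}} :=
  \sum_(i < b) 'X^i - \sum_(i < a) 'X^i.

Lemma gqE b a : (1 - 'X) * gq b a = 'X^a - 'X^b.
Proof.
have h n : (1 - 'X) * \sum_(i < n) ('X^i : {poly {mpoly int[m]}}) = 1 - 'X^n.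
  by rewrite -opprB mulNr -subrX1 opprB.
by rewrite /gq mulrBr !h opprB addrC addrA subrK.
Qed.

Lemma gq1 b a : (gq b a).[1] = b%:R - a%:R.
Proof.
rewrite /gq hornerD hornerN !horner_sum.
rewrite (eq_bigr (fun _ => 1)) => [|i _]; last by rewrite hornerXn expr1n.
rewrite [X in _ - X](eq_bigr (fun _ => 1)) => [|i _]; last by rewrite hornerXn expr1n.
by rewrite !sumr_const !card_ord.
Qed.

Definition Pdef : {poly {mpoly int[m]}} :=
  \sum_(A : {set 'I_m} | A \subset Eef e f) \sum_(B : {set 'I_m} | B \subset Eef e f)
    (xmon A * xmon B)%:P *
    gq (kcomp ends (f |: (e |: A)) + kcomp ends B) (kcomp ends (e |: A) + kcomp ends (f |: B)).

Lemma xmonU1 g (A : {set 'I_m}) : g \notin A -> xmon (g |: A) = 'X_g * xmon A.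
Proof. by move=> gA; rewrite /xmon big_setU1. Qed.

Lemma notinEef g (A : {set 'I_m}) : A \subset Eef e f -> (g == e) || (g == f) -> g \notin A.
Proof.
move=> sA h; apply/negP => gA; have := subsetP sA g gA; rewrite !inE.
by case/orP: h => /eqP ->; rewrite eqxx ?andbF.
Qed.

Lemma alg (R : comPzRingType) (ce cf ca cb x g : R) (k1 k2 k3 k4 : nat) :
  (1 - x) * g = x ^+ (k1 + k2) - x ^+ (k3 + k4) ->
  ce * ca * x ^+ k1 * (cf * cb * x ^+ k2) - cf * (ce * ca) * x ^+ k3 * (cb * x ^+ k4) =
  ce * cf * (1 - x) * (ca * cb * g).
Proof.
move=> H; transitivity (ce * cf * ca * cb * ((1 - x) * g)); last by ring.
rewrite H !exprD; ring.
Qed.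

Lemma Ddiff_eq : Ddiff ends e f = ('X_e * 'X_f)%:P * (1 - 'X) * Pdef.
Proof.
rewrite /Ddiff Tpoly_ef Tpoly_fe Tpoly_both Tpoly_none !big_distrlr /= -sumrB /Pdef mulr_sumr.
apply: eq_bigr => A sA; rewrite -sumrB mulr_sumr; apply: eq_bigr => B sB.
have eA : e \notin A by apply: notinEef; rewrite ?eqxx.
have fA : f \notin e |: A.
  by rewrite in_setU1 negb_or eq_sym hef notinEef // eqxx orbT.
have fB : f \notin B by apply: notinEef; rewrite ?eqxx ?orbT.
rewrite /Te !xmonU1 // !polyCM.
by apply: alg; apply: gqE.
Qed.

End Poly.


Section RHS.
Variables (V : finType) (m : nat) (ends : 'I_m -> V * V) (e f : 'I_m).
Local Open Scope ring_scope.

Lemma disjb (T : finType) (A B : {set T}) x : [disjoint A & B] -> ~~ ((x \in A) && (x \in B)).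
Proof. move=> d; apply/negP => /andP [xA xB]; exact: (disjP _ _ d) x xA xB. Qed.

Definition Sm (A : {set 'I_m}) := [set g | smoot ends e f A g].

Definition hh (p : {set 'I_m} * {set 'I_m}) :=
  (((p.2 :\: p.1) :&: Sm p.1, p.1 :\: p.2), (p.1 :&: p.2, (p.2 :\: p.1) :\: Sm p.1)).

Definition hh' (pq : ({set 'I_m} * {set 'I_m}) * ({set 'I_m} * {set 'I_m})) :=
  (pq.1.2 :|: pq.2.1, pq.1.1 :|: pq.2.1 :|: pq.2.2).

Definition Pc (pq : ({set 'I_m} * {set 'I_m}) * ({set 'I_m} * {set 'I_m})) :=
  [&& pq.1.1 \subset Eef e f, pq.1.2 \subset Eef e f & [disjoint pq.1.1 & pq.1.2]] &&
  Qc ends e f pq.1.1 pq.1.2 pq.2.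

Lemma hhK pq : Pc pq -> hh (hh' pq) = pq.
Proof.
case: pq => [[be ga] [I J]]; rewrite /Pc /= => /andP [/and3P [sb sg dbg] Q].
case/andP: Q => cI /and5P [sJ dJI dJb dJg nsm] /=.
move: cI; rewrite inE => /and5P [sI dIb dIg par smI].
rewrite /hh /hh' /=.
have key (x : 'I_m) : [&& ~~ ((x \in be) && (x \in ga)), ~~ ((x \in I) && (x \in be)),
   ~~ ((x \in I) && (x \in ga)), ~~ ((x \in J) && (x \in I)), ~~ ((x \in J) && (x \in be)),
   ~~ ((x \in J) && (x \in ga)), (x \in be) ==> smoot ends e f (ga :|: I) x &
   (x \in J) ==> ~~ smoot ends e f (ga :|: I) x].
  rewrite !disjb //=; apply/andP; split; [exact: (forallP smI) x|exact: (forallP nsm) x].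
congr (_, _); congr (_, _); apply/setP => x; rewrite !inE; apply/eqP; move: (key x); apply/implyP;
by case: (x \in be); case: (x \in ga); case: (x \in I); case: (x \in J);
   case: (smoot ends e f (ga :|: I) x).
Qed.


Lemma paracel_sub A : paracel ends e f A -> A \subset Eef e f.
Proof. by case/and3P. Qed.

Lemma Pc_hh A B : Pc (hh (A, B)) && (hh' (hh (A, B)) == (A, B)) =
  ((A \subset Eef e f) && paracel ends e f A) && (B \subset Eef e f).
Proof.
have -> : hh' (hh (A, B)) = (A, B).
  rewrite /hh /hh' /=; congr (_, _); apply/setP => x; rewrite !inE;
  by case: (x \in A); case: (x \in B); case: (smoot ends e f A x).
have eA : (A :\: B) :|: (A :&: B) = A.
  by apply/setP => x; rewrite !inE; case: (x \in A); case: (x \in B).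
rewrite eqxx andbT /Pc /hh /Qc /= inE /compatible eA.
apply/idP/idP.
  case/andP => /and3P [sb sg _] /andP [/and5P [sI _ _ par _] /and5P [sJ _ _ _ _]].
  rewrite par (paracel_sub par) /=.
  apply/subsetP => x xB; case: (boolP (x \in A)) => xA.
    exact: (subsetP (paracel_sub par) x xA).
  case: (boolP (smoot ends e f A x)) => xS.
    by apply: (subsetP sb); rewrite !inE xS xB xA.
  by apply: (subsetP sJ); rewrite !inE xS xB xA.
case/andP => /andP [sA par] sB.
apply/andP; split; first (apply/and3P; split).
- by apply/subsetP => x /setIP [/setDP [xB _] _]; exact: (subsetP sB).
- by apply/subsetP => x /setDP [xA _]; exact: (subsetP sA).
- apply/disjP => x /setIP [/setDP [_ xnA] _] /setDP [xA _]; by rewrite xA in xnA.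
apply/andP; split; first (apply/and5P; split).
- by apply/subsetP => x /setIP [xA _]; exact: (subsetP sA).
- apply/disjP => x /setIP [xA _] /setIP [/setDP [_ xnA] _]; by rewrite xA in xnA.
- apply/disjP => x /setIP [_ xB] /setDP [_ xnB]; by rewrite xB in xnB.
- exact: par.
- by apply/forallP => g; apply/implyP => /setIP [_]; rewrite inE.
apply/and5P; split.
- by apply/subsetP => x /setDP [/setDP [xB _] _]; exact: (subsetP sB).
- apply/disjP => x /setDP [/setDP [_ xnA] _] /setIP [xA _]; by rewrite xA in xnA.
- apply/disjP => x /setDP [_ xnS] /setIP [_ xS]; by rewrite xS in xnS.
- apply/disjP => x /setDP [/setDP [xB _] _] /setDP [_ xnB]; by rewrite xB in xnB.
by apply/forallP => g; apply/implyP => /setDP [_]; rewrite inE.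
Qed.

Lemma rhs_eq : rhs35 ends e f =
  \sum_(p : {set 'I_m} * {set 'I_m} | ((p.1 \subset Eef e f) && paracel ends e f p.1) && (p.2 \subset Eef e f))
    xmon p.1 * xmon p.2.
Proof.
rewrite /rhs35.
under eq_bigr do rewrite Bsum mulr_sumr.
rewrite pair_big_dep (reindex_onto hh hh'); last by move=> pq; apply: hhK.
apply: eq_big => [[A B]|[A B] _]; first exact: Pc_hh.
rewrite /hh /= (xmon3 (A :&: B) (A :&: B) ((B :\: A) :\: Sm A)) (xmon2 ((B :\: A) :&: Sm A) (A :\: B)).
rewrite -mpolyXD xmon2; congr mpolyX; apply/mnmP => i.
rewrite !mnmDE !mnE !inE.
by case: (i \in A); case: (i \in B); case: (smoot ends e f A i).
Qed.

End RHS.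


Section Final.
Variables (V : finType) (m : nat) (ends : 'I_m -> V * V) (e f : 'I_m).
Variable hef : e != f.
Local Open Scope ring_scope.

Definition dl (A : {set 'I_m}) : bool :=
  compF ends A (ends f).1 != compF ends A (ends f).2.

Lemma alg2 (R : comPzRingType) (c : R) (a b d x : nat) :
  c * ((a + (b + d))%:R - (a + x + b)%:R) = c * (d%:R - x%:R).
Proof. rewrite !natrD; ring. Qed.

Lemma P1 : (Pdef ends e f).[1] =
  \sum_(A : {set 'I_m} | A \subset Eef e f) \sum_(B : {set 'I_m} | B \subset Eef e f)
    xmon A * xmon B * ((dl B)%:R - (dl (e |: A))%:R).
Proof.
rewrite /Pdef horner_sum; apply: eq_bigr => A _; rewrite horner_sum.
apply: eq_bigr => B _; rewrite hornerM hornerC gq1.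
by rewrite (kcompU ends (e |: A) f) (kcompU ends B f) alg2.
Qed.

Lemma P1_final : (Pdef ends e f).[1] =
  \sum_(p : {set 'I_m} * {set 'I_m} | ((p.1 \subset Eef e f) && paracel ends e f p.1) && (p.2 \subset Eef e f))
    xmon p.1 * xmon p.2.
Proof.
rewrite P1.
have split (F1 F2 : {set 'I_m} -> {set 'I_m} -> {mpoly int[m]}) :
  \sum_(A : {set 'I_m} | A \subset Eef e f) \sum_(B : {set 'I_m} | B \subset Eef e f) (F1 A B - F2 A B) =
  \sum_(A : {set 'I_m} | A \subset Eef e f) \sum_(B : {set 'I_m} | B \subset Eef e f) F1 A B -
  \sum_(A : {set 'I_m} | A \subset Eef e f) \sum_(B : {set 'I_m} | B \subset Eef e f) F2 A B.
  by rewrite -sumrB; apply: eq_bigr => A _; rewrite sumrB.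
have ex : \sum_(A : {set 'I_m} | A \subset Eef e f) \sum_(B : {set 'I_m} | B \subset Eef e f)
      xmon A * xmon B * (dl B)%:R =
    \sum_(A : {set 'I_m} | A \subset Eef e f) \sum_(B : {set 'I_m} | B \subset Eef e f)
      xmon A * xmon B * (dl A)%:R.
  rewrite exchange_big; apply: eq_bigr => A _; apply: eq_bigr => B _.
  by rewrite (mulrC (xmon B)).
under eq_bigr do under eq_bigr do rewrite mulrBr.
rewrite split ex -split.
rewrite -(pair_big_dep (fun A : {set 'I_m} => (A \subset Eef e f) && paracel ends e f A)
   (fun _ B : {set 'I_m} => B \subset Eef e f) (fun A B => xmon A * xmon B)).
rewrite big_mkcondr; apply: eq_bigr => A sA.
rewrite paracel_br //; have := @br_mono _ _ ends e f A; rewrite /dl.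
case: (compF ends (e |: A) (ends f).1 != compF ends (e |: A) (ends f).2);
case: (compF ends A (ends f).1 != compF ends A (ends f).2) => /= H.
all: try by move: (H isT).
all: first [by rewrite big1 // => B _; rewrite ?mulr0 ?mulr1 subrr
           | by apply: eq_bigr => B _; rewrite mulr1 mulr0 subr0].
Qed.

End Final.

Local Open Scope ring_scope.
Theorem theorem3p5 (V : finType) (m : nat) (ends : 'I_m -> V * V)
    (e f : 'I_m) (hef : e != f) :
  exists P : {poly {mpoly int[m]}},
    Ddiff ends e f = ('X_e * 'X_f)%:P * (1 - 'X) * P /\
    P.[1] = rhs35 ends e f.
Proof.
exists (Pdef ends e f); split; first exact: Ddiff_eq.
by rewrite P1_final rhs_eq.
Qed.
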